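(* Let $\mathbf{z}_1,\ldots,\mathbf{z}_n\in\mathbb{R}^d$ satisfy $\|\mathbf{z}_i\|_2\le1$ for all $i\in[n]$ and $\mathbf{0}\in\mathrm{conv}(\mathbf{z}_1,\ldots,\mathbf{z}_n)$. Then $\big\|\frac1n\sum_{i=1}^n\mathbf{z}_i\big\|_2\le1-\frac1n$.
   Context: $\mathrm{conv}$ denotes the convex hull. *)

(* Defs.v *)
From mathcomp Require Import all_boot all_order all_algebra.
Set Implicit Arguments. Unset Strict Implicit. Unset Printing Implicit Defensive.
Import Order.TTheory GRing.Theory Num.Theory.
Local Open Scope ring_scope.

Definition norm2 {R : rcfType} {d : nat} (v : 'rV[R]_d) : R :=
  Num.sqrt (\sum_(j < d) v 0 j ^+ 2).

Definition in_conv {R : rcfType} {n d : nat} (z : 'I_n -> 'rV[R]_d) (x : 'rV[R]_d) : Prop :=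
  exists lam : 'I_n -> R,
    (forall i, 0 <= lam i) /\ \sum_(i < n) lam i = 1 /\ \sum_(i < n) lam i *: z i = x.

(* Main.v *)
Require Import Defs.
From mathcomp Require Import all_boot all_order all_algebra.
From mathcomp Require Import ring lra.
Import Order.TTheory GRing.Theory Num.Theory.
Local Open Scope ring_scope.

Lemma cs_ineq (R : rcfType) (d : nat) (a b : 'I_d -> R) :
  (\sum_j a j * b j) ^+ 2 <= (\sum_j a j ^+ 2) * (\sum_j b j ^+ 2).
Proof.
set A := \sum_j a j ^+ 2; set B := \sum_j b j ^+ 2; set S := \sum_j a j * b j.
have A0 : 0 <= A by apply: sumr_ge0 => j _; exact: sqr_ge0.
have [Az|Ap] := eqVneq A 0.
  have a0 : forall j, a j = 0.
    move=> j; apply/eqP; rewrite -sqrf_eq0; apply/eqP.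
    exact: (psumr_eq0P (fun j _ => sqr_ge0 (a j)) Az).
  rewrite /S (eq_bigr (fun _ => 0)); last by move=> j _; rewrite a0 mul0r.
  by rewrite big1 // expr0n /= Az mul0r.
have Apos : 0 < A by rewrite lt_def Ap A0.
have key : \sum_j (A * b j - S * a j) ^+ 2 = A * (A * B - S ^+ 2).
  have gen : forall x y, \sum_j (x * b j - y * a j) ^+ 2
      = x ^+ 2 * B - 2 * x * y * S + y ^+ 2 * A.
    move=> x y; rewrite /A /B /S !mulr_sumr -sumrB -big_split /=.
    by apply: eq_bigr => j _; ring.
  rewrite gen; ring.
have : 0 <= A * (A * B - S ^+ 2).
  by rewrite -key; apply: sumr_ge0 => j _; exact: sqr_ge0.
by rewrite pmulr_rge0 // subr_ge0.
Qed.

Lemma norm2_ge0 (R : rcfType) d (v : 'rV[R]_d) : 0 <= norm2 v.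
Proof. exact: sqrtr_ge0. Qed.

Lemma norm2_0 (R : rcfType) d : norm2 (0 : 'rV[R]_d) = 0.
Proof.
rewrite /norm2 big1 ?sqrtr0 // => j _; by rewrite mxE expr0n.
Qed.

Lemma norm2D (R : rcfType) d (u v : 'rV[R]_d) : norm2 (u + v) <= norm2 u + norm2 v.
Proof.
have h := @cs_ineq R d (fun j => u 0 j) (fun j => v 0 j).
set A := \sum_j u 0 j ^+ 2 in h; set B := \sum_j v 0 j ^+ 2 in h.
set S := \sum_j u 0 j * v 0 j in h.
have A0 : 0 <= A by apply: sumr_ge0 => j _; exact: sqr_ge0.
have B0 : 0 <= B by apply: sumr_ge0 => j _; exact: sqr_ge0.
have e : \sum_j (u + v) 0 j ^+ 2 = A + 2 * S + B.
  rewrite /A /S /B mulr_sumr -!big_split /=; apply: eq_bigr => j _.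
  rewrite mxE; ring.
rewrite /norm2 e -[_ + _ in X in _ <= X]ger0_norm ?addr_ge0 ?sqrtr_ge0 //.
rewrite -sqrtr_sqr ler_sqrt ?sqr_ge0 //.
rewrite sqrrD !sqr_sqrtr // -/A -/B.
have : S <= Num.sqrt A * Num.sqrt B.
  rewrite -sqrtrM //; apply: le_trans (ler_wsqrtr h).
  by rewrite sqrtr_sqr ler_norm.
move=> hS; rewrite -mulr_natl; lra.
Qed.

Lemma norm2Z (R : rcfType) d (c : R) (v : 'rV[R]_d) : norm2 (c *: v) = `|c| * norm2 v.
Proof.
rewrite /norm2 -sqrtr_sqr -sqrtrM ?sqr_ge0 // mulr_sumr.
by congr Num.sqrt; apply: eq_bigr => j _; rewrite mxE exprMn.
Qed.

Lemma norm2_sum (R : rcfType) d n (f : 'I_n -> 'rV[R]_d) :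
  norm2 (\sum_(i < n) f i) <= \sum_(i < n) norm2 (f i).
Proof.
apply: (big_ind2 (fun x y => norm2 x <= y)).
- by rewrite norm2_0.
- move=> x1 y1 x2 y2 h1 h2; exact: le_trans (@norm2D _ _ x1 x2) (lerD h1 h2).
- by [].
Qed.

Theorem lemma3p10 (R : rcfType) (n d : nat) (z : 'I_n -> 'rV[R]_d)
  (hnorm : forall i, norm2 (z i) <= 1)
  (hconv : in_conv z 0) :
  norm2 (n%:R^-1 *: \sum_(i < n) z i) <= 1 - n%:R^-1.
Proof.
move: hconv => [lam [lam0 [lam1 lamz]]].
destruct n as [|n'].
  by move/eqP: lam1; rewrite big_ord0 eq_sym oner_eq0.
have [k _ hk] := @arg_maxP _ R _ ord0 predT lam isT.
set L := lam _ in hk.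
set N : R := n'.+1%:R.
have Npos : 0 < N by rewrite ltr0n.
have NL1 : 1 <= N * L.
  have : \sum_(i < n'.+1) lam i <= \sum_(i < n'.+1) L.
    by apply: ler_sum => i _; exact: hk.
  by rewrite lam1 sumr_const card_ord -mulr_natl.
have NLpos : 0 < N * L by apply: lt_le_trans NL1; exact: ltr01.
have L1 : L <= 1.
  by rewrite -lam1 (bigD1 k) //= lerDl; apply: sumr_ge0 => i _.
pose mu i := N^-1 - lam i / (N * L).
have mu0 : forall i, 0 <= mu i.
  move=> i; rewrite /mu subr_ge0 ler_pdivrMr // mulKf ?(lt0r_neq0 Npos) //; exact: hk.
have e : N^-1 *: \sum_i z i = \sum_i mu i *: z i.
  rewrite [RHS](eq_bigr (fun i => N^-1 *: z i - (N * L)^-1 *: (lam i *: z i))); last first.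
    by move=> i _; rewrite /mu scalerBl scalerA mulrC.
  by rewrite sumrB -!scaler_sumr lamz scaler0 subr0.
rewrite e; apply: le_trans (@norm2_sum _ _ _ _) _.
apply: (@le_trans _ _ (\sum_i mu i)).
  apply: ler_sum => i _; rewrite norm2Z ger0_norm //.
  by rewrite -{2}[mu i]mulr1 ler_wpM2l.
rewrite /mu sumrB sumr_const card_ord -mulr_natr mulVf ?gt_eqF //.
rewrite -mulr_suml lam1 mul1r lerD2l lerN2 lef_pV2 ?posrE //.
by rewrite -{2}[N]mulr1 ler_wpM2l // ltW.
Qed.
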